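(* Let $\mathcal A$ be a linear time-invariant algorithm with state-space realization $(A,B,C,D)$ and oracle map $\phi$. If $\mathcal A$ converges to a fixed point $(y^\star,u^\star,x^\star)$, then for every $n\ge1$ its repetition $\mathcal A^n$ converges to the fixed point $(y',u',x^\star)$, where $y'=(y^\star,\dots,y^\star)$ and $u'=(u^\star,\dots,u^\star)$ consist of $n$ stacked copies of $y^\star$ and $u^\star$ respectively.
   Context: The algorithm $\mathcal A$ generates $x^{k+1}=Ax^k+Bu^k$, $y^k=Cx^k+Du^k$, $u^k=\phi(y^k)$. A fixed point of $\mathcal A$ is a triple $(y^\star,u^\star,x^\star)$ with $x^\star=Ax^\star+Bu^\star$, $y^\star=Cx^\star+Du^\star$, $u^\star=\phi(y^\star)$. The repetition $\mathcal A^n$ performs $n$ iterations of $\mathcal A$ as one iteration; its state is that of $\mathcal A$ and its oracle arguments/outputs in one iteration are $(y^{nk},\dots,y^{nk+n-1})$ and $(u^{nk},\dots,u^{nk+n-1})$ stacked; its realization is state matrix $A^n$, input matrix $[A^{n-1}B,\dots,AB,B]$, output matrix with block rows $C,CA,\dots,CA^{n-1}$, and feedthrough matrix with $(r,s)$ block $CA^{r-s-1}B$ for $r>s$, $D$ for $r=s$, $0$ for $r<s$; a fixed point of it is defined analogously (with oracle map $\phi$ applied blockwise). *)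

(* Defs.v *)
From HB Require Import structures.
From mathcomp Require Import all_boot all_order all_algebra.
From mathcomp Require Import all_classical all_reals all_analysis.
Set Implicit Arguments. Unset Strict Implicit. Unset Printing Implicit Defensive.
Import Order.TTheory GRing.Theory Num.Theory.
Local Open Scope classical_set_scope.
Local Open Scope ring_scope.

Section LTI.
Variables (R : realType) (nx nu ny : nat).
Implicit Types (A : 'M[R]_nx) (B : 'M[R]_(nx, nu)) (C : 'M[R]_(ny, nx))
  (D : 'M[R]_(ny, nu)) (phi : 'cV[R]_ny -> 'cV[R]_nu).

Definition is_trajectory A B C D phi
  (y : nat -> 'cV[R]_ny) (u : nat -> 'cV[R]_nu) (x : nat -> 'cV[R]_nx) : Prop :=
  forall k, [/\ x k.+1 = A *m x k + B *m u k,
               y k = C *m x k + D *m u k &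
               u k = phi (y k)].

Definition is_fixed_point A B C D phi
  (ys : 'cV[R]_ny) (us : 'cV[R]_nu) (xs : 'cV[R]_nx) : Prop :=
  [/\ xs = A *m xs + B *m us, ys = C *m xs + D *m us & us = phi ys].

Definition converges_to A B C D phi (ys : 'cV[R]_ny) (us : 'cV[R]_nu)
  (xs : 'cV[R]_nx) : Prop :=
  forall y u x, is_trajectory A B C D phi y u x ->
    (* matrices over R^o (= R) carry the entrywise topology of R *)
    [/\ (y : nat -> 'cV[R^o]_ny) @ \oo --> (ys : 'cV[R^o]_ny),
        (u : nat -> 'cV[R^o]_nu) @ \oo --> (us : 'cV[R^o]_nu) &
        (x : nat -> 'cV[R^o]_nx) @ \oo --> (xs : 'cV[R^o]_nx)].
End LTI.

Section Repetition.
Variables (R : realType) (nx nu ny n : nat).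
Variables (A : 'M[R]_nx) (B : 'M[R]_(nx, nu)) (C : 'M[R]_(ny, nx))
  (D : 'M[R]_(ny, nu)) (phi : 'cV[R]_ny -> 'cV[R]_nu).

Definition rep_A : 'M[R]_nx := A ^+ n.

Definition rep_B : 'M[R]_(nx, \sum_(i < n) nu) :=
  \mxrow_(s < n) (A ^+ (n - s.+1) *m B).

Definition rep_C : 'M[R]_(\sum_(i < n) ny, nx) :=
  \mxcol_(r < n) (C *m A ^+ r).

Definition rep_D : 'M[R]_(\sum_(i < n) ny, \sum_(i < n) nu) :=
  \mxblock_(r < n, s < n)
    (if (s < r)%N then C *m A ^+ (r - s.+1) *m B
     else if r == s then D else 0).

Definition rep_phi (Y : 'cV[R]_(\sum_(i < n) ny)) : 'cV[R]_(\sum_(i < n) nu) :=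
  \mxcol_(i < n) phi (submxcol Y i).

Definition stack k (v : 'cV[R]_k) : 'cV[R]_(\sum_(i < n) k) :=
  \mxcol_(i < n) v.
End Repetition.

(* Main.v *)
Require Import Defs.
From HB Require Import structures.
From mathcomp Require Import all_boot all_order all_algebra.
From mathcomp Require Import all_classical all_reals all_analysis.
Import Order.TTheory GRing.Theory Num.Theory.
Local Open Scope classical_set_scope.
Local Open Scope ring_scope.

Lemma cvg_entries (T : topologicalType) m n (f : nat -> 'M[T]_(m,n)) (M : 'M[T]_(m,n)) :
  (forall i j, (fun k => f k i j) @ \oo --> M i j) -> f @ \oo --> M.
Proof.
move=> H A [P PM sPA]; rewrite /= /nbhs /=.
have : \forall k \near \oo, forall ij : 'I_m * 'I_n, P ij.1 ij.2 (f k ij.1 ij.2).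
  apply: filter_forall => -[i j]; exact: (H i j _ (PM i j)).
apply: filterS => k Hk; apply: sPA => i j; exact: (Hk (i, j)).
Qed.

Lemma cvg_entry (T : topologicalType) m n (f : nat -> 'M[T]_(m,n)) (M : 'M[T]_(m,n)) i j :
  f @ \oo --> M -> (fun k => f k i j) @ \oo --> M i j.
Proof.
move=> H A HA; apply: (H [set N : 'M[T]_(m,n) | A (N i j)]).
exists (fun i' j' => if (i' == i) && (j' == j) then A else setT).
  by move=> i' j'; case: andP => [[/eqP-> /eqP->]|_] //; exact: filterT.
by move=> N HN; have := HN i j; rewrite !eqxx.
Qed.

Lemma cvg_sub (T : topologicalType) (u : nat -> T) (l : T) (g : nat -> nat) :
  (forall k, (k <= g k)%N) -> u @ \oo --> l -> (u \o g) @ \oo --> l.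
Proof.
move=> Hg Hu; apply: cvg_comp Hu.
apply/cvgnyPge => A; near=> x; apply: leq_trans (Hg x); near: x.
exact: nbhs_infty_ge.
Unshelve. all: end_near.
Qed.
Section S.
Variables (R : realType) (nx nu ny : nat) (A : 'M[R]_nx) (B : 'M[R]_(nx, nu)).
Lemma unroll (x : nat -> 'cV[R]_nx) (w : nat -> 'cV[R]_nu) m :
  (forall k, x k.+1 = A *m x k + B *m w k) -> forall i,
  x (m + i)%N = A ^+ i *m x m + \sum_(s < i) A ^+ (i - s.+1) *m B *m w (m + s)%N.
Proof.
move=> H; elim=> [|i IH]; first by rewrite addn0 expr0 mul1mx big_ord0 addr0.
rewrite addnS H IH big_ord_recr /= subnn expr0 mul1mx mulmxDr mulmxA addrA.
congr (_ + _ + _); first by rewrite mulmxE -exprS.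
rewrite mulmx_sumr; apply: eq_bigr => s _.
by rewrite !mulmxA mulmxE -exprS subSS subnSK.
Qed.
End S.
Section S3.
Variables (R : realType) (nx nu ny n : nat) (A : 'M[R]_nx) (B : 'M[R]_(nx, nu))
  (C : 'M[R]_(ny, nx)) (D : 'M[R]_(ny, nu)).

Lemma blockA X (W : nat -> 'cV[R]_nu) :
  rep_A n A *m X + rep_B n A B *m (\mxcol_(s < n) W s : 'cV_(\sum_(i<n) nu)) =
  A ^+ n *m X + \sum_(s < n) A ^+ (n - s.+1) *m B *m W s.
Proof. by rewrite /rep_A /rep_B mul_mxrow_mxcol. Qed.

Lemma blockC X (W : nat -> 'cV[R]_nu) (r : 'I_n) :
  submxcol (rep_C n A C *m X + rep_D n A B C D *m (\mxcol_(s < n) W s : 'cV_(\sum_(i<n) nu))) r =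
  C *m (A ^+ r *m X + \sum_(s < r) A ^+ (r - s.+1) *m B *m W s) + D *m W r.
Proof.
rewrite submxcolD /rep_C /rep_D mxcol_mul mul_mxblock_mxrow !mxcolK.
rewrite (bigD1 r) //= ltnn eqxx mulmxDr !mulmxA -!addrA; congr (_ + _); rewrite addrC; congr (_ + _).

set F := fun s : nat => C *m A ^+ (r - s.+1) *m B *m W s.
have -> : \sum_(s < n | s != r) (if (s < r)%N then C *m A ^+ (r - s.+1) *m B
     else if r == s then D else 0) *m W s = \sum_(s < n | (s < r)%N) F s.
  rewrite big_mkcond [RHS]big_mkcond; apply: eq_bigr => s _ /=.
  case: eqVneq => [->|nsr] /=; first by rewrite ltnn.
  by case: (ltngtP s r) => [sr|rs|sr] //; rewrite mul0mx.
rewrite mulmx_sumr.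
rewrite -(big_mkord (fun s => (s < r)%N) F).
rewrite -(big_nat_widen 0 r n xpredT F (ltnW (ltn_ord r))) big_mkord.
by apply: eq_bigr => s _; rewrite /F !mulmxA.
Qed.
End S3.

Lemma mxcol_cvg (R : realType) (m N : nat) (Z : nat -> 'cV[R^o]_(\sum_(i<N) m))
  (z : nat -> 'cV[R^o]_m) (l : 'cV[R^o]_m) :
  (0 < N)%N ->
  (forall k (s : 'I_N), submxcol (Z k) s = z (k * N + s)%N) ->
  z @ \oo --> l -> Z @ \oo --> (stack N l : 'cV[R^o]_(\sum_(i<N) m)).
Proof.
move=> N0 hZ hz; apply: cvg_entries => j c.
rewrite /stack mxE.
set s := tagnat.sig1 j; set t := tagnat.sig2 j.
have -> : (fun k => Z k j c) = (fun q => z q t c) \o (fun k => k * N + s)%N.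
  apply: funext => k /=; rewrite -[Z k]submxcolK mxE -/s -/t.
  by rewrite hZ.
apply: cvg_sub; first by move=> k; apply: leq_trans (leq_pmulr k N0) (leq_addr _ _).
exact: cvg_entry.
Qed.

Theorem proposition7p3 (R : realType) (nx nu ny : nat)
  (A : 'M[R]_nx) (B : 'M[R]_(nx, nu)) (C : 'M[R]_(ny, nx)) (D : 'M[R]_(ny, nu))
  (phi : 'cV[R]_ny -> 'cV[R]_nu)
  (ys : 'cV[R]_ny) (us : 'cV[R]_nu) (xs : 'cV[R]_nx) :
  is_fixed_point A B C D phi ys us xs ->
  converges_to A B C D phi ys us xs ->
  forall n : nat, (1 <= n)%N ->
    is_fixed_point (rep_A n A) (rep_B n A B) (rep_C n A C) (rep_D n A B C D)
      (@rep_phi R nu ny n phi) (stack n ys) (stack n us) xs /\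
    converges_to (rep_A n A) (rep_B n A B) (rep_C n A C) (rep_D n A B C D)
      (@rep_phi R nu ny n phi) (stack n ys) (stack n us) xs.
Proof.
move=> [fx fy fu] conv [//|n] _.
set N := n.+1.
have key : forall i, xs = A ^+ i *m xs + \sum_(s < i) A ^+ (i - s.+1) *m B *m us.
  by move=> i; exact: (@unroll R nx nu A B (fun _ => xs) (fun _ => us) 0 (fun _ => fx) i).
split.
  split.
  - by rewrite /stack (@blockA R nx nu N A B xs (fun _ => us)) -key.
  - apply/mxcolP => r.
    by rewrite /stack (@blockC R nx nu ny N A B C D xs (fun _ => us)) -key mxcolK.
  - by rewrite /rep_phi /stack; apply: eq_mxcol => i; rewrite mxcolK -fu.
move=> Y U X tr.
pose u' (m : nat) : 'cV[R]_nu := submxcol (U (m %/ N)%N) (inord (m %% N)).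
pose y' (m : nat) : 'cV[R]_ny := submxcol (Y (m %/ N)%N) (inord (m %% N)).
pose x' := fix f (m : nat) : 'cV[R]_nx :=
  if m is m'.+1 then A *m f m' + B *m u' m' else X 0%N.
have hxrec : forall k, x' k.+1 = A *m x' k + B *m u' k by [].
have hdiv : forall k (s : 'I_N), ((k * N + s) %/ N = k)%N /\ ((k * N + s) %% N = s)%N.
  move=> k s; rewrite divnMDl // divn_small // addn0 modnMDl modn_small //.
have hu : forall k (s : 'I_N), u' (k * N + s)%N = submxcol (U k) s.
  by move=> k s; rewrite /u'; case: (hdiv k s) => -> ->; rewrite inord_val.
have hy : forall k (s : 'I_N), y' (k * N + s)%N = submxcol (Y k) s.
  by move=> k s; rewrite /y'; case: (hdiv k s) => -> ->; rewrite inord_val.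
have hU : forall k, U k = \mxcol_(s < N) u' (k * N + s)%N.
  by move=> k; rewrite -[U k]submxcolK; apply: eq_mxcol => s; rewrite hu.
have hX : forall k, x' (k * N)%N = X k.
  elim=> [//|k IH]; rewrite mulSnr.
  rewrite (@unroll R nx nu A B x' u' (k * N) hxrec N) IH.
  have [-> _ _] := tr k.
  by rewrite hU (@blockA R nx nu N A B (X k) (fun s => u' (k * N + s)%N)).
have hx : forall k (s : 'I_N), x' (k * N + s)%N =
    A ^+ s *m X k + \sum_(j < s) A ^+ (s - j.+1) *m B *m u' (k * N + j)%N.
  by move=> k s; rewrite (@unroll R nx nu A B x' u' (k * N) hxrec s) hX.
have gen : forall k (s : 'I_N),
    y' (k * N + s)%N = C *m x' (k * N + s)%N + D *m u' (k * N + s)%N /\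
    u' (k * N + s)%N = phi (y' (k * N + s)%N).
  move=> k s; have [_ hYk hUk] := tr k; split.
  - rewrite hy hx hYk hU.
    exact: (@blockC R nx nu ny N A B C D (X k) (fun j => u' (k * N + j)%N) s).
  - by rewrite hu hy hUk /rep_phi mxcolK.
have trj : is_trajectory A B C D phi y' u' x'.
  move=> m; have [h1 h2] := gen (m %/ N)%N (Ordinal (ltn_pmod m (ltn0Sn n))).
  by rewrite /= -divn_eq in h1 h2; split.
have [cy cu cx] := conv _ _ _ trj.
split.
- apply: (@mxcol_cvg R ny N Y y' ys (ltn0Sn n) _ cy) => k s; rewrite hy //.
- apply: (@mxcol_cvg R nu N U u' us (ltn0Sn n) _ cu) => k s; rewrite hu //.
- have -> : X = x' \o (fun k => k * N)%N by apply: funext => k /=; rewrite hX.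
  apply: cvg_sub cx => k; exact: leq_pmulr.
Qed.
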